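(* Let $d\ge2$ and let $v=(v_1,\dots,v_d)\in\mathbb{R}^d$ satisfy $\sum_j v_j=1$ and $\sum_j v_j^2=d$. Let $v_{\max}=\max_j v_j$ and $v_{\min}=\min_j v_j$. Then $$\frac{(d-1)v_{\max}-(d+1)v_{\min}}{2}\le\frac{d-1}{\sqrt2\,d}\sqrt{(d+1)(d^2+d+2)}-\frac1d,$$ with equality if and only if the components of $v$ in nonincreasing order $v^\downarrow$ satisfy, with $s=\sqrt{\frac{d+1}{2(d^2+d+2)}}$, $$v^\downarrow_1=\frac1d+\frac{d^2-d+2}{d}s,\quad v^\downarrow_2=\dots=v^\downarrow_{d-1}=\frac1d+\frac2d s,\quad v^\downarrow_d=\frac1d-\frac{d^2+d-2}{d}s.$$ *)

(* Defs.v *)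
From mathcomp Require Import all_boot all_order all_algebra all_fingroup.
Set Implicit Arguments. Unset Strict Implicit. Unset Printing Implicit Defensive.
Import Order.TTheory GRing.Theory Num.Theory.
Local Open Scope ring_scope.

Definition is_max_of (R : realFieldType) (d : nat) (v : 'I_d -> R) (m : R) : Prop :=
  (exists i, v i = m) /\ (forall j, v j <= m).

Definition is_min_of (R : realFieldType) (d : nat) (v : 'I_d -> R) (m : R) : Prop :=
  (exists i, v i = m) /\ (forall j, m <= v j).

Definition is_decr_rearr (R : realFieldType) (d : nat) (v w : 'I_d -> R) : Prop :=
  (exists sigma : 'S_d, forall i, w i = v (sigma i)) /\
  (forall i j : 'I_d, (i <= j)%N -> w j <= w i).

(* Main.v *)
Require Import Defs.
From mathcomp Require Import all_boot all_order all_algebra all_fingroup.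
From mathcomp Require Import ring lra.
Import Order.TTheory GRing.Theory Num.Theory.
Local Open Scope ring_scope.

Lemma core (R : rcfType) (dd s q p a b M : R) :
 2 <= dd -> 0 < s -> q = dd^+2+dd+2 -> 2*q*s^+2 = dd+1 -> dd* p = 1+2*s -> 0 <= M ->
 (a-p)^+2+(b-p)^+2+M = dd - 2* p + dd* p^+2 ->
 ((dd-1)*a - (dd+1)*b)/2 <= ((dd-1)*s*q - 1)/dd /\
 (((dd-1)*a - (dd+1)*b)/2 = ((dd-1)*s*q - 1)/dd ->
   a = p + s*(dd-1) /\ b = p - s*(dd+1) /\ M = 0).
Proof.
move=> hd hs hq hsq hp hM hk.
have dd0 : dd != 0 by apply/eqP => h; rewrite h in hd; lra.
have hR : dd - 2* p + dd* p^+2 = s^+2*(2*dd^+2+2).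
  apply: (mulfI dd0).
  have -> : dd * (dd - 2* p + dd* p^+2) = dd^+2 - 2*(dd* p) + (dd* p)^+2 by ring.
  rewrite hp.
  have -> : dd * (s^+2*(2*dd^+2+2)) = (dd-1)*(2*q*s^+2) + 4*s^+2 by rewrite hq; ring.
  rewrite hsq; ring.
set A := a - p. set B := b - p.
set cz := (dd-1)*A - (dd+1)*B.
have hid : (A - s*(dd-1))^+2 + (B + s*(dd+1))^+2 + M = 2*s*(s*(2*dd^+2+2) - cz).
  have -> : (A - s*(dd-1))^+2 + (B + s*(dd+1))^+2 + M =
     (A^+2 + B^+2 + M) - 2*s*cz + s^+2*(2*dd^+2+2) by rewrite /cz; ring.
  rewrite hk hR; ring.
have hL : ((dd-1)*a - (dd+1)*b)/2 - ((dd-1)*s*q - 1)/dd = (cz - s*(2*dd^+2+2)) / 2.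
  apply: (mulfI dd0).
  have -> : dd * (((dd-1)*a - (dd+1)*b)/2 - ((dd-1)*s*q - 1)/dd)
     = (dd * cz - 2 * (dd* p) - 2*(dd-1)*s*q + 2)/2.
    rewrite /cz /A /B; field; exact: dd0.
  by rewrite hp hq; field.
have hnn : 0 <= (A - s*(dd-1))^+2 + (B + s*(dd+1))^+2 + M.
  by rewrite addr_ge0 ?sqr_ge0 // addr_ge0 ?sqr_ge0.
have hc : cz <= s*(2*dd^+2+2).
  rewrite hid pmulr_rge0 in hnn; [lra|lra].
split.
  rewrite -subr_le0 hL. lra.
move=> heq.
have hz : cz = s*(2*dd^+2+2).
  move/eqP: heq; rewrite -subr_eq0 hL => /eqP. lra.
move: hid; rewrite hz subrr mulr0 => hid.
have h1 : 0 <= (A - s*(dd-1))^+2 := sqr_ge0 _.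
have h2 : 0 <= (B + s*(dd+1))^+2 := sqr_ge0 _.
have e1 : (A - s*(dd-1))^+2 = 0 by lra.
have e2 : (B + s*(dd+1))^+2 = 0 by lra.
move/eqP: e1; rewrite sqrf_eq0 subr_eq0 /A subr_eq => /eqP e1.
move/eqP: e2; rewrite sqrf_eq0 addr_eq0 /B subr_eq => /eqP e2.
split; first by rewrite e1 addrC.
split; last by lra.
by rewrite e2; ring.
Qed.
Arguments core {R dd s q p a b M}.
Lemma exists_decr (R : realFieldType) (d : nat) (v : 'I_d -> R) :
  exists w, is_decr_rearr v w.
Proof.
set t := [tuple v i | i < d].
set leT := fun x y : R => y <= x.
set st := sort_tuple leT t.
have hp : perm_eq st t by rewrite /st /= perm_sort.
case/tuple_permP: hp => sg hsg.
exists (fun i => tnth st i); split.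
  exists sg => i; have hst := val_inj hsg; by rewrite hst !tnth_mktuple.
move=> i j hij.
have hs : sorted leT st.
  rewrite /st /=; apply: sort_sorted => x y; rewrite /leT; exact: le_total.
have := sorted_leq_nth _ _ 0 hs.
rewrite size_tuple => H.
rewrite !(tnth_nth 0).
apply: (H _ _) => //.
- move=> x y z; rewrite /leT => h1 h2; exact: le_trans h2 h1.
- move=> x; exact: lexx.
- by rewrite inE.
- by rewrite inE.
Qed.
Arguments exists_decr {R d}.

Lemma decr_first (R : realFieldType) (d : nat) (v w : 'I_d -> R) m i :
  is_decr_rearr v w -> is_max_of v m -> val i = 0%N -> w i = m.
Proof.
move=> [[sg hsg] hmono] [[i0 hi0] hle] hi.
apply/le_anti/andP; split; first by rewrite hsg.
have -> : m = w (sg^-1 i0)%g by rewrite hsg permKV.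
apply: hmono; by rewrite hi.
Qed.
Arguments decr_first {R d v w m i}.

Lemma decr_last (R : realFieldType) (d : nat) (v w : 'I_d -> R) m i :
  is_decr_rearr v w -> is_min_of v m -> val i = d.-1 -> w i = m.
Proof.
move=> [[sg hsg] hmono] [[i0 hi0] hle] hi.
apply/le_anti/andP; split; last by rewrite hsg.
have -> : m = w (sg^-1 i0)%g by rewrite hsg permKV.
apply: hmono; by rewrite hi -ltnS (ltn_predK (ltn_ord i)) ltn_ord.
Qed.
Arguments decr_last {R d v w m i}.

Theorem lemmaS3 (R : rcfType) (d : nat) (hd : (2 <= d)%N) (v : 'I_d -> R)
  (hsum : \sum_(j < d) v j = 1) (hsq : \sum_(j < d) v j ^+ 2 = d%:R)
  (vmax vmin : R) (hmax : is_max_of v vmax) (hmin : is_min_of v vmin) :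
  let dd := d%:R : R in
  let bound := (dd - 1) / (Num.sqrt 2 * dd)
                 * Num.sqrt ((dd + 1) * (dd ^+ 2 + dd + 2)) - dd^-1 in
  let s := Num.sqrt ((dd + 1) / (2 * (dd ^+ 2 + dd + 2))) in
  ((dd - 1) * vmax - (dd + 1) * vmin) / 2 <= bound /\
  (((dd - 1) * vmax - (dd + 1) * vmin) / 2 = bound <->
   forall w : 'I_d -> R, is_decr_rearr v w ->
     forall i : 'I_d,
       w i = (if val i == 0%N then dd^-1 + (dd ^+ 2 - dd + 2) / dd * s
              else if val i == d.-1 then dd^-1 - (dd ^+ 2 + dd - 2) / dd * s
              else dd^-1 + 2 / dd * s)).
Proof.
move=> dd bound s.
rewrite -/dd in hsq.
have hd2 : 2 <= dd by rewrite /dd (ler_nat R 2 d).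
have dd0 : dd != 0 by apply/eqP => h; rewrite h in hd2; lra.
have [q hq] : {q | q = dd^+2+dd+2} := exist _ _ erefl.
have hq0 : 0 < q by have := sqr_ge0 dd; rewrite hq; lra.
have hs0 : 0 < s by rewrite /s -hq sqrtr_gt0 divr_gt0 //; lra.
have hs2 : 2*q*s^+2 = dd+1.
  rewrite /s -hq sqr_sqrtr; last by rewrite divr_ge0 //; lra.
  field; apply/eqP => h; rewrite h in hq0; lra.
have hT : Num.sqrt ((dd+1)*q) = Num.sqrt 2 * s * q.
  apply/eqP; rewrite -(@eqrXn2 _ 2) //; last first.
  - by rewrite !mulr_ge0 ?sqrtr_ge0 //; lra.
  - exact: sqrtr_ge0.
  rewrite !exprMn (@sqr_sqrtr _ 2) // (@sqr_sqrtr _ ((dd+1)*q)); last by rewrite mulr_ge0 //; lra.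
  apply/eqP; rewrite -hs2. ring.
have hb : bound = ((dd-1)*s*q - 1)/dd.
  rewrite /bound -hq hT; field; apply/andP; split => //.
  by rewrite sqrtr_eq0 -ltNge; lra.
have [[i0 hi0] hle] := hmax.
have [[j0 hj0] hge] := hmin.
clearbody s bound.
have [p hpd] : {p | p = (1+2*s)/dd} := exist _ _ erefl.
have hp : dd * p = 1 + 2*s by rewrite hpd; field.
have hij : i0 != j0.
  apply/eqP => e.
  have hc : forall k, v k = vmax.
    move=> k; apply/le_anti; rewrite hle /= -hi0 e hj0; exact: hge.
  have h1 : dd * vmax = 1.
    by rewrite -hsum (eq_bigr _ (fun k _ => hc k)) sumr_const card_ord -mulr_natl.
  have h2 : dd * vmax^+2 = dd.
    by rewrite -{2}hsq (eq_bigr _ (fun k _ => congr1 (fun x => x ^+ 2) (hc k))) sumr_const card_ord -mulr_natl.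
  have h3 : dd * dd = 1.
    by rewrite -{1}h2 -[1](expr1n R 2) -h1; ring.
  nra.
have hsplit : forall f : 'I_d -> R,
    \sum_j f j = f i0 + f j0 + \sum_(j | (j != i0) && (j != j0)) f j.
  move=> f; rewrite (bigD1 i0) //= (bigD1 j0) /= ?addrA //; by rewrite eq_sym.
have htot : \sum_j (v j - p)^+2 = dd - 2* p + dd* p^+2.
  have -> : dd - 2* p + dd* p^+2 = \sum_j v j ^+2 - 2* p * \sum_j v j + \sum_(j<d) p^+2.
    by rewrite hsq hsum sumr_const card_ord -mulr_natl -/dd; ring.
  rewrite mulr_sumr -sumrB -big_split /=; apply: eq_bigr => j _; ring.
set Mid := \sum_(j | (j != i0) && (j != j0)) (v j - p)^+2.
have hM : 0 <= Mid by apply: sumr_ge0 => j _; exact: sqr_ge0.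
have hk : (vmax - p)^+2 + (vmin - p)^+2 + Mid = dd - 2* p + dd* p^+2.
  by rewrite -htot (hsplit (fun j => (v j - p)^+2)) hi0 hj0.
have [hineq heqc] := core hd2 hs0 hq hs2 hp hM hk.
have hd0 : (0 < d)%N by apply: leq_trans hd.
have hd1 : (d.-1 < d)%N by rewrite prednK.
have hd1n : (d.-1 == 0)%N = false by move: hd; case: (d) => [|[|n]].
set o0 := Ordinal hd0. set om := Ordinal hd1.
split; first by rewrite hb.
split.
- move=> heq w hw i. rewrite hb in heq. have [ea [eb eM]] := heqc heq.
  have hmid : forall k, k != i0 -> k != j0 -> v k = p.
    move=> k hk1 hk2.
    have := psumr_eq0P (P := fun j => (j != i0) && (j != j0)) (F := fun j => (v j - p)^+2)
      (fun j _ => sqr_ge0 _) eM (i := k).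
    rewrite hk1 hk2 => /(_ isT) /eqP; rewrite sqrf_eq0 subr_eq0 => /eqP; exact.
  have ua : forall k, v k = vmax -> k = i0.
    move=> k hk1; apply/eqP; apply: contraT => hn; exfalso.
    have [/eqP e|hn2] := boolP (k == j0).
      by move: hk1; rewrite e hj0 ea eb => h; nra.
    by move: hk1; rewrite hmid // ea => h; nra.
  have ub : forall k, v k = vmin -> k = j0.
    move=> k hk1; apply/eqP; apply: contraT => hn; exfalso.
    have [/eqP e|hn2] := boolP (k == i0).
      by move: hk1; rewrite e hi0 ea eb => h; nra.
    by move: hk1; rewrite hmid // eb => h; nra.
  have [[sg hsg] hmono] := hw.
  case: ifP => [/eqP hi|hn0].
    by rewrite (decr_first hw hmax hi) ea hpd; field.
  case: ifP => [/eqP hi|hnl].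
    by rewrite (decr_last hw hmin hi) eb hpd; field.
  rewrite hsg hmid.
  + by rewrite hpd; field.
  + apply/eqP => e.
    have h0 := decr_first hw hmax (erefl : val o0 = 0%N).
    rewrite hsg in h0. have e0 := ua _ h0. rewrite -e in e0.
    have := perm_inj e0 => eo. by rewrite -eo /= eqxx in hn0.
  + apply/eqP => e.
    have h0 := decr_last hw hmin (erefl : val om = d.-1).
    rewrite hsg in h0. have e0 := ub _ h0. rewrite -e in e0.
    have := perm_inj e0 => eo. by rewrite -eo /= eqxx in hnl.
- move=> hall. have [w hw] := exists_decr v.
  have h1 := hall w hw o0. rewrite /= (decr_first hw hmax (erefl : val o0 = 0%N)) in h1.
  have h2 := hall w hw om. rewrite /= hd1n eqxx (decr_last hw hmin (erefl : val om = d.-1)) in h2.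
  by rewrite h1 h2 hb hq; field.
Qed.
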